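(* Let $\mathbf x=(k,S,\Lambda,\mathbf a)$ be an abelian group $k$-parameter which is full, i.e. $\Lambda={}^{k+1}({}^\omega S)$ (and $\mathbf a$ is arbitrary). If $U\subseteq{}^\omega S$ and $|U|\ge(|S|+\aleph_0)^{+(k+1)}$ (the $(k+1)$-st successor cardinal of $|S|+\aleph_0$), then $G_U$ is not free.
   Context: For a set $S$, ${}^\omega S$ is the set of all functions $\omega\to S$. An abelian group $k$-parameter is $\mathbf x=(k,S,\Lambda,\mathbf a)$ with $k<\omega$, $S$ a set, $\Lambda\subseteq {}^{k+1}({}^\omega S)$ (sequences $\bar\eta=\langle\eta_0,\dots,\eta_k\rangle$, $\eta_\ell\in{}^\omega S$) and $\mathbf a:\Lambda\times\omega\to\mathbb Z$, $\mathbf a_{\bar\eta,n}=\mathbf a(\bar\eta,n)$. For $\bar\eta\in\Lambda$, $m\le k$, $n<\omega$, $\bar\eta\upharpoonleft\langle m,n\rangle$ is the sequence obtained from $\bar\eta$ by replacing $\eta_m$ with $\eta_m\restriction n$. $\Lambda_m=\{\bar\eta\upharpoonleft\langle m,n\rangle:\bar\eta\in\Lambda,n<\omega\}$, $\Lambda_{\le k}=\bigcup_{m\le k}\Lambda_m$. $G_{\mathbf x}$ is the abelian group generated by $z$, $x_{\bar\nu}$ ($\bar\nu\in\Lambda_{\le k}$), $y_{\bar\eta,n}$ ($\bar\eta\in\Lambda,n<\omega$) freely except for the relations $(n!)y_{\bar\eta,n+1}=y_{\bar\eta,n}+\mathbf a_{\bar\eta,n}z+\sum_{m\le k}x_{\bar\eta\upharpoonleft\langle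 m,n\rangle}$ ($\bar\eta\in\Lambda$, $n<\omega$). For $U\subseteq{}^\omega S$, $G_U$ is the subgroup of $G_{\mathbf x}$ generated by $\{z\}\cup\{y_{\bar\eta,n}:\bar\eta\in\Lambda\cap{}^{k+1}U,n<\omega\}\cup\{x_{\bar\eta\upharpoonleft\langle m,n\rangle}:\bar\eta\in\Lambda\cap{}^{k+1}U,m\le k,n<\omega\}$. *)

(* Defs.v *)
From mathcomp Require Import all_boot all_algebra.
From mathcomp Require Import boolp.
From Stdlib Require List.
Set Implicit Arguments. Unset Strict Implicit. Unset Printing Implicit Defensive.
Import GRing.Theory.
Local Open Scope ring_scope.

Definition wseq (S : Type) := nat -> S.
Definition tup (k : nat) (S : Type) := 'I_k.+1 -> wseq S.

(* an entry of a sequence nu in Lambda_{<=k}: either a finite sequence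
   (eta_m restricted to n) or an omega-sequence *)
Inductive entry (S : Type) := EFin of seq S | EInf of wseq S.

Definition restr (k : nat) (S : Type) (eta : tup k S) (m : 'I_k.+1) (n : nat)
  : 'I_k.+1 -> entry S :=
  fun l => if l == m then EFin (mkseq (eta m) n) else EInf (eta l).

Inductive gen (k : nat) (S : Type) :=
| Gz
| Gx of ('I_k.+1 -> entry S)
| Gy of tup k S & nat.

(* elements of the free abelian group on the generators (only finitely
   supported ones will ever arise, as they are built as Z-spans of basis
   vectors) *)
Definition fab (k : nat) (S : Type) := gen k S -> int.

Definition ebas (k : nat) (S : Type) (g : gen k S) : fab k S :=
  fun h => if pselect (h = g) then 1 else 0.

Inductive zspan (k : nat) (S : Type) (A : fab k S -> Prop) : fab k S -> Prop :=
| zspan0 : zspan A (fun _ => 0)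
| zspan_add a v : A a -> zspan A v -> zspan A (fun g => a g + v g)
| zspan_sub a v : A a -> zspan A v -> zspan A (fun g => v g - a g).

(* The generators x_nu are indexed by Lambda_{<=k}; y_{eta,n} by Lambda x omega. *)
Definition valid_gen (k : nat) (S : Type) (Lam : tup k S -> Prop) (g : gen k S) : Prop :=
  match g with
  | Gz => True
  | Gx nu => exists eta m n, Lam eta /\ nu = restr eta m n
  | Gy eta _ => Lam eta
  end.

Definition relvec (k : nat) (S : Type) (a : tup k S -> nat -> int)
  (eta : tup k S) (n : nat) : fab k S :=
  fun g => (n`!)%:Z * ebas (Gy eta n.+1) g - ebas (Gy eta n) g
           - a eta n * ebas (@Gz k S) g
           - \sum_(m < k.+1) ebas (Gx (restr eta m n)) g.

Definition relations (k : nat) (S : Type) (Lam : tup k S -> Prop)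
  (a : tup k S -> nat -> int) : fab k S -> Prop :=
  fun v => exists eta n, Lam eta /\ v = relvec a eta n.

(* G_x is the free abelian group on the valid generators modulo
   R := zspan relations; an element v of the free group represents the coset
   v + R, and two elements are equal in G_x iff their difference lies in R. *)
Definition Rsub (k : nat) (S : Type) (Lam : tup k S -> Prop)
  (a : tup k S -> nat -> int) : fab k S -> Prop :=
  zspan (relations Lam a).

Definition genU (k : nat) (S : Type) (Lam : tup k S -> Prop)
  (U : wseq S -> Prop) : fab k S -> Prop :=
  fun v => v = ebas (@Gz k S)
    \/ (exists eta n, Lam eta /\ (forall l, U (eta l)) /\ v = ebas (Gy eta n))
    \/ (exists eta m n, Lam eta /\ (forall l, U (eta l))
                          /\ v = ebas (Gx (restr eta m n))).

(* G_U is free: it has a Z-basis (b_i)_{i in I}, i.e. elements of G_U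
   (represented by lifts in the span of the generators of G_U) such that
   every element of G_U is a finite Z-combination of them (modulo R), and
   no nontrivial finite Z-combination vanishes in G_x. *)
Definition comb (k : nat) (S : Type) (I : Type) (b : I -> fab k S)
  (s : list I) (c : I -> int) : fab k S :=
  fun g => \sum_(i <- s) c i * b i g.

Definition GU_free (k : nat) (S : Type) (Lam : tup k S -> Prop)
  (a : tup k S -> nat -> int) (U : wseq S -> Prop) : Prop :=
  exists (I : Type) (b : I -> fab k S),
    (forall i, zspan (genU Lam U) (b i))
    /\ (forall u, zspan (genU Lam U) u ->
          exists (s : list I) (c : I -> int),
            Rsub Lam a (fun g => u g - comb b s c g))
    /\ (forall (s : list I) (c : I -> int), List.NoDup s ->
          Rsub Lam a (comb b s c) -> forall i, List.In i s -> c i = 0).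

Definition inj_into (T T' : Type) (X : T -> Prop) (Y : T' -> Prop) : Prop :=
  exists f : T -> T', (forall x, X x -> Y (f x))
    /\ (forall x y, X x -> X y -> f x = f y -> x = y).

(* card_ge_succ S n X  <->  |X| >= (|S| + aleph_0)^{+n}  (X a set of omega-sequences).
   n = 0:  |X| >= |S| + aleph_0  iff  S and nat inject into X.
   n+1:    |X| >= mu^+  iff  |X| > mu  iff  some Y subset X has |Y| >= mu
           and X does not inject into Y. *)
Fixpoint card_ge_succ (S : Type) (n : nat) (X : wseq S -> Prop) : Prop :=
  match n with
  | 0 => inj_into (fun _ : S => True) X /\ inj_into (fun _ : nat => True) X
  | n'.+1 => exists Y : wseq S -> Prop,
      (forall x, Y x -> X x) /\ card_ge_succ n' Y /\ ~ inj_into X Y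
  end.

(* Main.v *)
Require Import Defs.
From mathcomp Require Import all_boot all_algebra.
From mathcomp Require Import boolp.
From mathcomp Require classical_sets.
Set Implicit Arguments. Unset Strict Implicit. Unset Printing Implicit Defensive.

Module ZW.
Import classical_sets.
Lemma zorn_sets (T : Type) (P : (T -> Prop) -> Prop) :
  (forall F : (T -> Prop) -> Prop, (forall G, F G -> P G) ->
     (forall G1 G2, F G1 -> F G2 -> (forall t, G1 t -> G2 t) \/ (forall t, G2 t -> G1 t)) ->
     P (fun t => exists2 G, F G & G t)) ->
  exists M, P M /\ forall G, (forall t, M t -> G t) -> (exists t, G t /\ ~ M t) -> ~ P G.
Proof.
move=> H.
have [M [PM Mmax]] := @Zorn_bigcup T P (fun F FP Ft => H F FP Ft).
exists M; split=> // G MG [t [Gt Mt]] PG; apply: (Mmax G) => //; split=> //.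
by move=> /(_ t Gt).
Qed.
End ZW.

Lemma inj_trans (T1 T2 T3 : Type) (X : T1 -> Prop) (Y : T2 -> Prop) (Z : T3 -> Prop) :
  inj_into X Y -> inj_into Y Z -> inj_into X Z.
Proof.
move=> [f [f1 f2]] [g [g1 g2]]; exists (fun x => g (f x)); split=> [x Xx|x y Xx Xy E].
  exact/g1/f1.
by apply: f2 => //; apply: g2 => //; apply: f1.
Qed.

Lemma inj_sub (T1 T2 : Type) (X X' : T1 -> Prop) (Y : T2 -> Prop) :
  (forall x, X x -> X' x) -> inj_into X' Y -> inj_into X Y.
Proof.
move=> XX' [f [f1 f2]]; exists f; split=> [x /XX'/f1 //|x y Xx Xy]; apply: f2; exact: XX'.
Qed.

Lemma inj_subr (T1 T2 : Type) (X : T1 -> Prop) (Y Y' : T2 -> Prop) :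
  (forall x, Y x -> Y' x) -> inj_into X Y -> inj_into X Y'.
Proof. by move=> YY' [f [f1 f2]]; exists f; split=> // x /f1/YY'. Qed.

Lemma inj_id (T : Type) (X Y : T -> Prop) : (forall x, X x -> Y x) -> inj_into X Y.
Proof. by move=> XY; exists id; split. Qed.

Lemma inj_surj (K T T' : Type) (P : K -> Prop) (X : T -> Prop) (Y : T' -> Prop)
  (F : K -> T) (k0 : K) :
  (forall t, X t -> exists k, P k /\ F k = t) -> inj_into P Y -> inj_into X Y.
Proof.
move=> HX [e [e1 e2]].
have /choice[g Hg] : forall t, exists k, X t -> P k /\ F k = t.
  move=> t; case: (pselect (X t)) => [/HX [k Hk]|nX]; first by exists k.
  by exists k0.
exists (fun t => e (g t)); split=> [t Xt|s t Xs Xt E]; first by apply/e1; case: (Hg t Xt).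
have Est := e2 _ _ (Hg s Xs).1 (Hg t Xt).1 E.
by rewrite -(Hg s Xs).2 -(Hg t Xt).2 Est.
Qed.

Lemma inj_compare (T1 T2 : Type) (X : T1 -> Prop) (Y : T2 -> Prop) :
  inj_into X Y \/ inj_into Y X.
Proof.
pose P (G : T1 * T2 -> Prop) := (forall p, G p -> X p.1 /\ Y p.2) /\
  (forall p q, G p -> G q -> (p.1 = q.1 <-> p.2 = q.2)).
have [M [[M1 M2] Mmax]] : exists M, P M /\ forall G, (forall t, M t -> G t) ->
    (exists t, G t /\ ~ M t) -> ~ P G.
  apply: ZW.zorn_sets => F FP Ft; split.
    by move=> p [G FG Gp]; apply: (FP G FG).1.
  move=> p q [G1 F1 G1p] [G2 F2 G2q].
  case: (Ft _ _ F1 F2) => [S12|S21].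
    by apply: (FP G2 F2).2 => //; apply: S12.
  by apply: (FP G1 F1).2 => //; apply: S21.
case: (pselect (forall x, X x -> exists y, M (x, y))) => [HD|].
  case: (pselectT T2) => [nT2|t2].
    right; exists (fun y => match nT2 y with end); split=> [y|y]; case: (nT2 y).
  left; have /choice[f Hf] : forall x, exists y, X x -> M (x, y).
    move=> x; case: (pselect (X x)) => [/HD [y Hy]|nX]; first by exists y.
    by exists t2.
  exists f; split=> [x Xx|x x' Xx Xx' E]; first exact: (M1 _ (Hf x Xx)).2.
  by have /= := (M2 _ _ (Hf x Xx) (Hf x' Xx')).2 E.
move=> /existsNP [x0 /not_implyP [Xx0 nx0]].
case: (pselect (forall y, Y y -> exists x, M (x, y))) => [HR|].
  right; have /choice[f Hf] : forall y, exists x, Y y -> M (x, y).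
    move=> y; case: (pselect (Y y)) => [/HR [x Hx]|nY]; first by exists x.
    by exists x0.
  exists f; split=> [y Yy|y y' Yy Yy' E]; first exact: (M1 _ (Hf y Yy)).1.
  by have /= := (M2 _ _ (Hf y Yy) (Hf y' Yy')).1 E.
move=> /existsNP [y0 /not_implyP [Yy0 ny0]].
exfalso; apply: (Mmax (fun p => M p \/ p = (x0, y0))).
- by move=> t Mt; left.
- exists (x0, y0); split; first by right.
  by move=> M0; apply: nx0; exists y0.
- split.
    by move=> p [/M1 //|->].
  move=> p q [Mp|->] [Mq|->] /=.
  + exact: M2.
  + split=> E; [case: nx0; exists p.2 | case: ny0; exists p.1];
      by rewrite -E; case: p Mp {E}.
  + split=> E; [case: nx0; exists q.2 | case: ny0; exists q.1];
      by rewrite E; case: q Mq {E}.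
  + by [].
Qed.

Section Hess.
Variables (T : Type) (A : T -> Prop) (n0 : nat -> T).
Hypothesis n0A : forall i, A (n0 i).
Hypothesis n0inj : forall i j, n0 i = n0 j -> i = j.

Let BG (G : (T * T) * T -> Prop) t := exists y, G ((t, t), y).
Let P (G : (T * T) * T -> Prop) :=
  (forall q, G q -> [/\ BG G q.1.1, BG G q.1.2 & BG G q.2]) /\
      (forall t, BG G t -> A t) /\
      ((forall t, ~ BG G t) \/ (forall i, BG G (n0 i))) /\
      (forall s t, BG G s -> BG G t -> exists y, G ((s, t), y)) /\
      (forall q q', G q -> G q' -> (q.1 = q'.1 <-> q.2 = q'.2)).

Let pn (i j : nat) : nat := pickle (i, j).
Let pn_inj i j i' j' : pn i j = pn i' j' -> i = i' /\ j = j'.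
Proof. by move=> /(pcan_inj pickleK) [-> ->]. Qed.

Lemma hess_main : inj_into (fun p : T * T => A p.1 /\ A p.2) A.
Proof.
have [M [[M1 [M2 [M3 [M4 M5]]]] Mmax]] : exists M, P M /\ forall G, (forall t, M t -> G t) ->
    (exists t, G t /\ ~ M t) -> ~ P G.
  apply: ZW.zorn_sets => F FP Ft.
  have BGU t : BG (fun q => exists2 G, F G & G q) t <-> exists2 G, F G & BG G t.
    split; first by move=> [y [G FG Gy]]; exists G => //; exists y.
    by move=> [G FG [y Gy]]; exists y; exists G.
  refine (conj _ (conj _ (conj _ (conj _ _)))).
  - move=> q [G FG Gq]; have [H1 H2 H3] := (FP G FG).1 q Gq.
    by split; apply/BGU; exists G.
  - by move=> t /BGU [G FG /((FP G FG).2.1)].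
  - case: (pselect (exists G, F G /\ exists t, BG G t)) => [[G [FG [t Gt]]]|nG].
      right => i; apply/BGU; exists G => //.
      by case: (FP G FG) => _ [_ [[/(_ t Gt) []|Hn] _]]; apply: Hn.
    left=> t /BGU [G FG Gt]; apply: nG; exists G; split=> //; by exists t.
  - move=> s t /BGU [G1 F1 G1s] /BGU [G2 F2 G2t].
    have mono G G' (S : forall q, G q -> G' q) u : BG G u -> BG G' u.
      by move=> [y Gy]; exists y; apply: S.
    case: (Ft _ _ F1 F2) => [S12|S21].
      have [y Gy] := (FP G2 F2).2.2.2.1 s t (mono _ _ S12 _ G1s) G2t.
      by exists y; exists G2.
    have [y Gy] := (FP G1 F1).2.2.2.1 s t G1s (mono _ _ S21 _ G2t).
    by exists y; exists G1.
  - move=> q q' [G1 F1 G1q] [G2 F2 G2q].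
    case: (Ft _ _ F1 F2) => [S12|S21].
      by apply: (FP G2 F2).2.2.2.2 => //; apply: S12.
    by apply: (FP G1 F1).2.2.2.2 => //; apply: S21.
pose B := BG M.
have /choice [g Hg] : forall p : T * T, exists y, B p.1 -> B p.2 -> M (p, y).
  move=> [s t]; case: (pselect (B s /\ B t)) => [[Bs Bt]|nst].
    by have [y Hy] := M4 s t Bs Bt; exists y.
  by exists (n0 0) => Bs Bt; case: nst.
have gB s t : B s -> B t -> B (g (s, t)).
  by move=> Bs Bt; have [] := M1 _ (Hg (s, t) Bs Bt).
have ginj s t s' t' : B s -> B t -> B s' -> B t' -> g (s, t) = g (s', t') ->
    s = s' /\ t = t'.
  move=> Bs Bt Bs' Bt' E.
  by have /= [_ /(_ E) [-> ->]] := M5 _ _ (Hg (s, t) Bs Bt) (Hg (s', t') Bs' Bt').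
have BA t : B t -> A t := M2 t.
have Bn0 : forall i, B (n0 i).
  case: M3 => // Bempty; exfalso.
  pose G0 q := exists i j, q = ((n0 i, n0 j), n0 (pn i j)).
  have BG0 t : BG G0 t <-> exists i, t = n0 i.
    split; first by move=> [y [i [j [-> _ _]]]]; exists i.
    by move=> [i ->]; exists (n0 (pn i i)); exists i, i.
  apply: (Mmax G0).
  - by move=> q /M1 [/Bempty].
  - exists ((n0 0, n0 0), n0 (pn 0 0)); split; first by exists 0, 0.
    by move=> /M1 [/Bempty].
  refine (conj _ (conj _ (conj _ (conj _ _)))).
  - move=> q [i [j ->]] /=; split; apply/BG0; by eexists.
  - by move=> t /BG0 [i ->].
  - by right=> i; apply/BG0; exists i.
  - move=> s t /BG0 [i ->] /BG0 [j ->]; exists (n0 (pn i j)); by exists i, j.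
  - move=> q q' [i [j ->]] [i' [j' ->]] /=; split.
      by case=> /n0inj -> /n0inj ->.
    by move=> /n0inj /pn_inj [-> ->].
pose R t := A t /\ ~ B t.
case: (inj_compare R B) => [[h [h1 h2]]|[h [h1 h2]]].
-
  pose f t := if pselect (B t) then g (n0 0, t) else g (n0 1, h t).
  have fB t : A t -> B (f t).
    rewrite /f => At; case: pselect => Bt; first exact: gB.
    by apply: (gB) => //; apply: h1.
  have finj s t : A s -> A t -> f s = f t -> s = t.
    rewrite /f => As At; case: pselect => Bs; case: pselect => Bt E.
    + by have [] := ginj _ _ _ _ (Bn0 0) Bs (Bn0 0) Bt E.
    + by have [/n0inj] := ginj _ _ _ _ (Bn0 0) Bs (Bn0 1) (h1 _ (conj At Bt)) E.
    + by have [/n0inj] := ginj _ _ _ _ (Bn0 1) (h1 _ (conj As Bs)) (Bn0 0) Bt E.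
    + have [_ E'] := ginj _ _ _ _ (Bn0 1) (h1 _ (conj As Bs)) (Bn0 1) (h1 _ (conj At Bt)) E.
      exact: h2.
  exists (fun p => g (f p.1, f p.2)); split.
    by move=> [s t] [/= As At]; apply/BA/gB; apply: fB.
  move=> [s t] [s' t'] [/= As At] [/= As' At'] E.
  have [E1 E2] := ginj _ _ _ _ (fB _ As) (fB _ At) (fB _ As') (fB _ At') E.
  by rewrite (finj _ _ As As' E1) (finj _ _ At At' E2).
- (* B injects into the rest: extend *)
  exfalso.
  pose C t := exists2 b, B b & t = h b.
  have CR t : C t -> R t by move=> [b Bb ->]; apply: h1.
  have /choice [hi Hhi] : forall t, exists b, C t -> B b /\ t = h b.
    move=> t; case: (pselect (C t)) => [[b Bb ->]|nC]; first by exists b.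
    by exists (n0 0).
  pose pr t := if pselect (B t) then t else hi t.
  have prB t : B t \/ C t -> B (pr t).
    rewrite /pr; case: pselect => // Bt [//|/Hhi []//].
  have prK t : B t \/ C t -> t = if pselect (B t) then pr t else h (pr t).
    rewrite /pr; case: pselect => // Bt [//|/Hhi [] //].
  pose tg (p : T * T) := (nat_of_bool (asbool (B p.1)) + 2 * nat_of_bool (asbool (B p.2)))%N.
  pose nv p := h (g (n0 (tg p), g (pr p.1, pr p.2))).
  pose BC t := B t \/ C t.
  pose G' q := M q \/ [/\ BC q.1.1, BC q.1.2, ~ (B q.1.1 /\ B q.1.2) & q.2 = nv q.1].
  have nvC p : BC p.1 -> BC p.2 -> C (nv p).
    move=> H1 H2; exists (g (n0 (tg p), g (pr p.1, pr p.2))) => //.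
    by apply: (gB); [apply: (Bn0) | apply: (gB); apply: (prB)].
  have BCn t : C t -> ~ B t by move=> /CR [].
  have BG' t : BG G' t <-> BC t.
    split.
      move=> [y [/M1 [Bt _ _]|[Ht _ _ _]]]; [by left | by []].
    move=> [Bt|Ct].
      by have [y Hy] := M4 t t Bt Bt; exists y; left.
    exists (nv (t, t)); right; split=> //; try by right.
    by move=> [/BCn].
  apply: (Mmax G').
  - by move=> q Mq; left.
  - pose c0 := h (n0 0).
    have Cc0 : C c0 by exists (n0 0).
    exists ((c0, c0), nv (c0, c0)); split.
      by right; split=> //; [right|right|move=> [/(BCn _ Cc0)]].
    by move=> /M1 [/(BCn _ Cc0)].
  refine (conj _ (conj _ (conj _ (conj _ _)))).
  - move=> q [Mq|[H1 H2 H3 H4]].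
      by have [X1 X2 X3] := M1 q Mq; split; apply/BG'; left.
    split; apply/BG' => //.
    by rewrite H4; right; apply: nvC.
  - move=> t /BG' [/BA //|/CR []//].
  - by right=> i; apply/BG'; left.
  - move=> s t /BG' Hs /BG' Ht.
    case: (pselect (B s /\ B t)) => [[Bs Bt]|nB].
      by have [y Hy] := M4 s t Bs Bt; exists y; left.
    by exists (nv (s, t)); right.
  - have disj q q' : M q -> [/\ BC q'.1.1, BC q'.1.2, ~ (B q'.1.1 /\ B q'.1.2)
        & q'.2 = nv q'.1] -> q.1 <> q'.1 /\ q.2 <> q'.2.
      move=> Mq [H1 H2 H3 H4]; have [Q1 Q2 Q3] := M1 q Mq; split.
        by move=> E; apply: H3; rewrite -E.
      by move=> E; apply: (BCn q'.2); [rewrite H4; apply: nvC | rewrite -E].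
    move=> q q' [Mq|Nq] [Mq'|Nq'].
    + exact: M5.
    + by have [D1 D2] := disj _ _ Mq Nq'; split.
    + by have [D1 D2] := disj _ _ Mq' Nq; split=> E; [case: D1 | case: D2].
    + case: Nq => [H1 H2 H3 H4]; case: Nq' => [H1' H2' H3' H4'].
      split; first by rewrite H4 H4' => ->.
      rewrite H4 H4' /nv => E.
      have Eg := h2 _ _ (gB _ _ (Bn0 _) (gB _ _ (prB _ H1) (prB _ H2)))
                      (gB _ _ (Bn0 _) (gB _ _ (prB _ H1') (prB _ H2'))) E.
      have [/n0inj Etg Eg2] := ginj _ _ _ _ (Bn0 _) (gB _ _ (prB _ H1) (prB _ H2))
                      (Bn0 _) (gB _ _ (prB _ H1') (prB _ H2')) Eg.
      have [Ep1 Ep2] := ginj _ _ _ _ (prB _ H1) (prB _ H2) (prB _ H1') (prB _ H2') Eg2.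
      have key u u' : BC u -> BC u' -> asbool (B u) = asbool (B u') -> pr u = pr u' -> u = u'.
        move=> Hu Hu' Eb Ep; rewrite (prK _ Hu) (prK _ Hu') Ep.
        case: pselect => Bu; case: pselect => Bu' //.
          by move: Eb; rewrite (asboolT Bu) (asboolF Bu').
        by move: Eb; rewrite (asboolF Bu) (asboolT Bu').
      have tag_eq (x y x' y' : bool) : (x + 2 * y = x' + 2 * y')%N -> x = x' /\ y = y'.
        by case: x; case: y; case: x'; case: y'.
      move: Etg; rewrite /tg => /tag_eq [Eb1 Eb2].
      move: (key _ _ H1 H1' Eb1 Ep1) (key _ _ H2 H2' Eb2 Ep2).
      by case: (q.1) => ? ?; case: (q'.1) => ? ? /= -> ->.
Qed.
End Hess.

Lemma hess (T : Type) (A : T -> Prop) : inj_into (fun _ : nat => True) A ->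
  inj_into (fun p : T * T => A p.1 /\ A p.2) A.
Proof.
move=> [n0 [n1 n2]]; apply: (@hess_main T A n0) => [i|i j]; [exact: n1 | exact: n2].
Qed.

Section Code.
Variables (T : Type) (E : T -> Prop).
Hypothesis HN : inj_into (fun _ : nat => True) E.

Lemma inj_prod (K1 K2 : Type) (P1 : K1 -> Prop) (P2 : K2 -> Prop) :
  inj_into P1 E -> inj_into P2 E -> inj_into (fun p => P1 p.1 /\ P2 p.2) E.
Proof.
move=> [f1 [f11 f12]] [f2 [f21 f22]].
have [e [e1 e2]] := hess HN.
exists (fun p => e (f1 p.1, f2 p.2)); split.
  by move=> [x y] [/= Px Py]; apply: (e1); split; [apply: (f11)|apply: (f21)].
move=> [x y] [x' y'] [/= Px Py] [/= Px' Py'] E0.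
have [] := e2 (f1 x, f2 y) (f1 x', f2 y') (conj (f11 _ Px) (f21 _ Py))
   (conj (f11 _ Px') (f21 _ Py')) E0.
by move=> /f12 -> // /f22 ->.
Qed.

Lemma inj_sum (K1 K2 : Type) (P1 : K1 -> Prop) (P2 : K2 -> Prop) :
  inj_into P1 E -> inj_into P2 E ->
  inj_into (fun s => match s with inl a => P1 a | inr b => P2 b end) E.
Proof.
move=> [f1 [f11 f12]] [f2 [f21 f22]].
have [e [e1 e2]] := hess HN.
have [n0 [n1 n2]] := HN.
exists (fun s => match s with inl a => e (n0 0, f1 a) | inr b => e (n0 1, f2 b) end).
split.
  by case=> [a|b] H; apply: (e1); split; [exact: (n1)|exact: (f11)|exact: (n1)|exact: (f21)].
case=> [a|b] [a'|b'] H H' E0.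
- by have /(congr1 snd) /= /(f12 _ _ H H') -> := e2 (n0 0, f1 a) (n0 0, f1 a') (conj (n1 0 I) (f11 _ H))
    (conj (n1 0 I) (f11 _ H')) E0.
- by have /(congr1 fst) /= /(n2 _ _ I I) // := e2 (n0 0, f1 a) (n0 1, f2 b') (conj (n1 0 I) (f11 _ H))
    (conj (n1 1 I) (f21 _ H')) E0.
- by have /(congr1 fst) /= /(n2 _ _ I I) // := e2 (n0 1, f2 b) (n0 0, f1 a') (conj (n1 1 I) (f21 _ H))
    (conj (n1 0 I) (f11 _ H')) E0.
- by have /(congr1 snd) /= /(f22 _ _ H H') -> := e2 (n0 1, f2 b) (n0 1, f2 b') (conj (n1 1 I) (f21 _ H))
    (conj (n1 1 I) (f21 _ H')) E0.
Qed.

Lemma inj_seq (K : Type) (P : K -> Prop) :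
  inj_into P E -> inj_into (fun l : seq K => forall x, List.In x l -> P x) E.
Proof.
move=> [f [f1 f2]].
have [e [e1 e2]] := hess HN.
have [n0 [n1 n2]] := HN.
pose fix enc (l : seq K) : T :=
  match l with [::] => e (n0 0, n0 0) | x :: l => e (n0 1, e (f x, enc l)) end.
have encE l : (forall x, List.In x l -> P x) -> E (enc l).
  elim: l => [|x l IH] H /=; first by apply: (e1); split; apply: (n1).
  apply: (e1); split; first exact: (n1).
  apply: (e1); split; first by apply: (f1); apply: H; left.
  by apply: IH => y Hy; apply: H; right.
have encC x l : (forall y, List.In y (x :: l) -> P y) ->
    E (e (f x, enc l)).
  move=> H; apply: (e1); split; first by apply: (f1); apply: H; left.
  by apply: (encE) => y Hy; apply: H; right.
exists enc; split; first exact: encE.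
elim=> [|x l IH] [|x' l'] H H' /= E0.
- by [].
- by have /(congr1 fst) /= /(n2 _ _ I I) // := e2 (n0 0, n0 0) (n0 1, e (f x', enc l')) (conj (n1 0 I) (n1 0 I))
    (conj (n1 1 I) (encC _ _ H')) E0.
- by have /(congr1 fst) /= /(n2 _ _ I I) // := e2 (n0 1, e (f x, enc l)) (n0 0, n0 0) (conj (n1 1 I) (encC _ _ H))
    (conj (n1 0 I) (n1 0 I)) E0.
- have Hl : forall y, List.In y l -> P y by move=> y Hy; apply: H; right.
  have Hl' : forall y, List.In y l' -> P y by move=> y Hy; apply: H'; right.
  have /(congr1 snd) /= E1 := e2 (n0 1, e (f x, enc l)) (n0 1, e (f x', enc l')) (conj (n1 1 I) (encC _ _ H))
    (conj (n1 1 I) (encC _ _ H')) E0.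
  have E2 := e2 (f x, enc l) (f x', enc l')
    (conj (f1 _ (H x (or_introl erefl))) (encE _ Hl))
    (conj (f1 _ (H' x' (or_introl erefl))) (encE _ Hl')) E1.
  have Ex : f x = f x' by have := congr1 fst E2.
  have El : enc l = enc l' by have := congr1 snd E2.
  have {}Ex := f2 _ _ (H x (or_introl erefl)) (H' x' (or_introl erefl)) Ex.
  by rewrite Ex (IH l' Hl Hl' El).
Qed.

Lemma inj_union (W : nat -> T -> Prop) :
  (forall j, inj_into (W j) E) -> inj_into (fun t => exists j, W j t) E.
Proof.
move=> HW.
have /choice [h Hh] := HW.
have Hp : inj_into (fun p : nat * T => True /\ W p.1 p.2) E.
  pose Q (p : nat * T) := True /\ W p.1 p.2.
  have [e [e1 e2]] := hess HN.
  have [n0 [n1 n2]] := HN.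
  exists (fun p => e (n0 p.1, h p.1 p.2)); split.
    by move=> [j t] [_ /= Wt]; apply: (e1); split; [apply: (n1)|apply: (Hh j).1].
  move=> [j t] [j' t'] [_ /= Wt] [_ /= Wt'] E0.
  have E4 := e2 (n0 j, h j t) (n0 j', h j' t') (conj (n1 j I) ((Hh j).1 _ Wt))
    (conj (n1 j' I) ((Hh j').1 _ Wt')) E0.
  have Ej : j = j' by apply: (n2 _ _ I I); have := congr1 fst E4.
  subst j'; have E3 : h j t = h j t' by have := congr1 snd E4.
  by rewrite ((Hh j).2 _ _ Wt Wt' E3).
case: (pselect (exists t, exists j, W j t)) => [[t0 _]|nW].
  apply: (@inj_surj (nat * T) _ _ _ _ _ snd (0, t0)) Hp.
  by move=> t [j Wt]; exists (j, t).
have [n0 _] := HN.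
exists (fun _ => n0 0); split=> [t Wt|t t' Wt]; by case: nW; exists t.
Qed.

End Code.

Section Closure.
Variables (T : Type) (E : T -> Prop).
Hypothesis HN : inj_into (fun _ : nat => True) E.
Variable NEW : (T -> Prop) -> T -> Prop.
Hypothesis NEWfin : forall W c, NEW W c -> exists l : seq T,
  (forall x, List.In x l -> W x) /\ forall W', (forall x, List.In x l -> W' x) -> NEW W' c.
Hypothesis NEWsize : forall W, inj_into W E -> inj_into (NEW W) E.

Fixpoint Wj (Y : T -> Prop) (j : nat) : T -> Prop :=
  match j with 0 => Y | j'.+1 => fun c => Wj Y j' c \/ NEW (Wj Y j') c end.

Lemma closure_ex (Y : T -> Prop) : inj_into Y E ->
  exists W : T -> Prop, [/\ forall t, Y t -> W t, inj_into W E &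
     forall c, NEW W c -> W c].
Proof.
move=> HY; exists (fun t => exists j, Wj Y j t); split.
- by move=> t Yt; exists 0.
- apply: inj_union => // j; elim: j => [|j IH] //=.
  have [n0 _] := HN.
  apply: (@inj_surj (T + T) _ _ _ _ _ (fun s => match s with inl a => a | inr b => b end)
     (inl (n0 0))) (inj_sum HN IH (NEWsize IH)).
  by move=> c [Wc|Nc]; [exists (inl c)|exists (inr c)].
- have mono j j' t : (j <= j')%N -> Wj Y j t -> Wj Y j' t.
    move=> /subnK <-; elim: (j' - j)%N => [//|k IH] /= H; by left; apply: IH.
  move=> c /NEWfin [l [Hl Hfin]].
  have : exists J, forall x, List.In x l -> Wj Y J x.
    elim: l Hl {Hfin} => [|x l IH] Hl; first by exists 0.
    have [J HJ] := IH (fun y Hy => Hl y (or_intror Hy)).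
    have [j Hj] := Hl x (or_introl erefl).
    exists (maxn J j) => y [<-|Hy].
      by apply: (mono j) => //; apply: leq_maxr.
    by apply: (mono J); [apply: leq_maxl | apply: HJ].
  move=> [J HJ]; exists J.+1; right; exact: Hfin.
Qed.
End Closure.

Import GRing.Theory.
Local Open Scope ring_scope.

Section LV.
Variable I : eqType.
Definition vl (l : seq (I * int)) (i : I) : int := \sum_(x <- l | x.1 == i) x.2.
Definition pairing (l : seq (I * int)) (w : I -> rat) : rat := \sum_(x <- l) x.2%:~R * w x.1.

Lemma sum_pred1_seq (V : zmodType) (u : seq I) (y : I) (v : V) : uniq u -> y \in u ->
  \sum_(t <- u) (if y == t then v else 0) = v.
Proof.
elim: u => [//|t u IH] /= /andP [tu uu]; rewrite in_cons big_cons.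
case: (eqVneq y t) => [->|ne] /=.
  rewrite big1_seq ?addr0 // => t' /andP [_ t'u]; case: eqP => // E.
  by move: tu; rewrite E t'u.
by rewrite add0r => /IH ->.
Qed.

Lemma group_sum (V : zmodType) (F : I * int -> V) l (u : seq I) : uniq u ->
  {subset map fst l <= u} ->
  \sum_(x <- l) F x = \sum_(t <- u) \sum_(x <- l | x.1 == t) F x.
Proof.
move=> Hu; elim: l => [|y l IH] Hs.
  by rewrite big_nil big1 // => t _; rewrite big_nil.
rewrite big_cons IH; last by move=> t Ht; apply: Hs; rewrite /= in_cons Ht orbT.
have -> : \sum_(t <- u) \sum_(x <- y :: l | x.1 == t) F x =
   \sum_(t <- u) ((if y.1 == t then F y else 0) + \sum_(x <- l | x.1 == t) F x).
  by apply: eq_bigr => t _; rewrite big_cons; case: ifP; rewrite ?add0r.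
rewrite big_split /= sum_pred1_seq //; apply: Hs; by rewrite /= in_cons eqxx.
Qed.

Lemma vl_out l i : i \notin map fst l -> vl l i = 0.
Proof.
move=> H; rewrite /vl big1_seq // => x /andP [/eqP E xl]; case/negP: H.
by rewrite -E; apply: map_f.
Qed.

Lemma intr_sum (s : seq (I * int)) (P : pred (I * int)) (G : I * int -> int) :
  (\sum_(x <- s | P x) G x)%:~R = \sum_(x <- s | P x) (G x)%:~R :> rat.
Proof.
elim: s => [|x s IH]; first by rewrite !big_nil.
by rewrite !big_cons; case: ifP => // _; rewrite intrD IH.
Qed.

Lemma pairing_vl l w : pairing l w = \sum_(t <- undup (map fst l)) (vl l t)%:~R * w t.
Proof.
rewrite /pairing (@group_sum _ _ _ (undup (map fst l)) (undup_uniq _)); last first.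
  by move=> t; rewrite mem_undup.
apply: eq_bigr => t _; rewrite /vl intr_sum mulr_suml.
by apply: eq_bigr => x /eqP ->.
Qed.

Lemma pairing0 l w : (forall i, vl l i = 0) -> pairing l w = 0.
Proof. by move=> H; rewrite pairing_vl big1 // => t _; rewrite H mul0r. Qed.

Lemma vl_filter (P : pred I) l i :
  vl [seq x <- l | P x.1] i = if P i then vl l i else 0.
Proof.
rewrite /vl big_filter_cond big_mkcond [in RHS]big_mkcond /=.
case: ifP => Pi.
  by apply: eq_bigr => x _; case: eqP => [->|]; rewrite ?Pi ?andbF.
by rewrite big1 // => x _; case: eqP => [->|]; rewrite ?Pi ?andbF.
Qed.

Lemma pairing_filter (P : pred I) l w :
  (forall x, x \in l -> ~~ P x.1 -> w x.1 = 0) ->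
  pairing [seq x <- l | P x.1] w = pairing l w.
Proof.
move=> H; rewrite /pairing big_filter [in RHS](bigID (fun x => P x.1)) /=.
rewrite [X in _ = _ + X]big_seq_cond [X in _ = _ + X]big1 ?addr0 // => x /andP [xl nP].
by rewrite H ?mulr0.
Qed.
End LV.

Import GRing.Theory.
Local Open Scope ring_scope.

Lemma cg_nat (S : Type) d (X : wseq S -> Prop) :
  card_ge_succ d X -> inj_into (fun _ : nat => True) X /\ inj_into (fun _ : S => True) X.
Proof.
elim: d X => [|d IH] X /=; first by move=> [H1 H2].
by move=> [Y [YX [/IH [H1 H2] _]]]; split; apply: inj_subr YX _.
Qed.

Definition Pn (n : nat) : nat := (\prod_(k < n) k`!)%N.

Lemma Pn_gt0 n : (0 < Pn n)%N.
Proof. by apply: prodn_gt0 => i; apply: fact_gt0. Qed.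

Lemma PnS n : Pn n.+1 = (Pn n * n`!)%N.
Proof. by rewrite /Pn big_ord_recr. Qed.

Lemma int_div0 (x : int) : (forall n, exists y, x = (Pn n)%:Z * y) -> x = 0.
Proof.
move=> H; have [y Hy] := H (`|x|.+2)%N.
have Hge : (`|x| < Pn `|x|.+2)%N.
  rewrite PnS; apply: (@leq_trans (`|x|.+1`!)); first exact: fact_geq.
  by rewrite leq_pmull // Pn_gt0.
case: (eqVneq y 0) => [y0|yn0]; first by rewrite Hy y0 mulr0.
move: Hge; rewrite {1}Hy abszM /= => Hlt.
have : (Pn `|x|.+2 <= Pn `|x|.+2 * `|y|)%N by rewrite leq_pmulr // absz_gt0.
by rewrite leqNgt Hlt.
Qed.

Import GRing.Theory.
Local Open Scope ring_scope.

Lemma In_map_f (A : eqType) B (f : A -> B) s x : x \in s -> List.In (f x) (map f s).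
Proof.
elim: s => [//|y s IH]; rewrite in_cons => /orP [/eqP ->|/IH H] /=; [by left|by right].
Qed.

Lemma In_map_inv A B (f : A -> B) s y : List.In y (map f s) -> exists x, List.In x s /\ y = f x.
Proof.
elim: s => [//|x s IH] /= [<-|/IH [z [zs ->]]]; first by exists x; split=> //; left.
by exists z; split=> //; right.
Qed.

Lemma In_mem (A : eqType) (x : A) s : List.In x s -> x \in s.
Proof. by elim: s => [//|y s IH] /= [->|/IH]; rewrite in_cons ?eqxx // => ->; rewrite orbT. Qed.

Lemma In_nth B (t0 : B) s c : List.In c s -> exists q, nth t0 s q = c.
Proof.
elim: s => [//|x s IH] /= [->|/IH [q Hq]]; first by exists 0%N.
by exists q.+1.
Qed.

Section Abs.
Variables (S : Type) (I : eqType).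

Definition rstd d (eta : 'I_d -> wseq S) (m : 'I_d) (n : nat) : 'I_d -> entry S :=
  fun l => if l == m then EFin (mkseq (eta m) n) else EInf (eta l).

Definition abs_sys d (U : wseq S -> Prop) (Y : ('I_d -> wseq S) -> nat -> seq (I * int))
  (X : ('I_d -> entry S) -> seq (I * int)) (Z : seq (I * int))
  (a : ('I_d -> wseq S) -> nat -> int) (w : ('I_d -> wseq S) -> I -> rat)
  (C : I -> seq (wseq S)) : Prop :=
 (forall eta, (forall l, U (eta l)) -> forall n i,
    (n`!)%:Z * vl (Y eta n.+1) i = vl (Y eta n) i + a eta n * vl Z i
       + \sum_(m < d) vl (X (rstd eta m n)) i) /\
 (d = 0%N -> forall i, vl Z i = 0) /\
 (forall eta, (forall l, U (eta l)) -> pairing (Y eta 0) (w eta) = 1) /\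
 (forall eta i, (forall l, U (eta l)) -> w eta i != 0 -> forall l, List.In (eta l) (C i)).

Lemma abs_base U Y X Z a w C : @abs_sys 0%N U Y X Z a w C -> card_ge_succ 0%N U -> False.
Proof.
move=> [Hrel [HZ [HW1 _]]] [_ [n0 [n1 _]]].
pose eta0 := fun _ : 'I_0 => n0 0%N.
have Ueta : forall l, U (eta0 l) by move=> l; apply: n1.
have Hv n i : vl (Y eta0 0) i = (Pn n)%:Z * vl (Y eta0 n) i.
  elim: n => [|n IH]; first by rewrite /Pn big_ord0 mul1r.
  rewrite IH PnS PoszM -mulrA (Hrel _ Ueta n i) HZ // big_ord0 mulr0 !addr0 //.
have H0 i : vl (Y eta0 0) i = 0.
  by apply: int_div0 => n; exists (vl (Y eta0 n) i); apply: Hv.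
by have := HW1 _ Ueta; rewrite pairing0.
Qed.

Definition snoc T d (nu : 'I_d -> T) (r : T) : 'I_d.+1 -> T :=
  fun l => if unlift ord_max l is Some l' then nu l' else r.

Lemma snoc_lift T d (nu : 'I_d -> T) r l : snoc nu r (lift ord_max l) = nu l.
Proof. by rewrite /snoc liftK. Qed.

Lemma snoc_max T d (nu : 'I_d -> T) r : snoc nu r ord_max = r.
Proof. by rewrite /snoc unlift_none. Qed.

Lemma widen_lift d (m : 'I_d) : widen_ord (leqnSn d) m = lift ord_max m.
Proof. by apply: val_inj; rewrite /= /bump leqNgt ltn_ord. Qed.

Lemma rstd_snoc d (nu : 'I_d -> wseq S) r m n :
  rstd (snoc nu r) (widen_ord (leqnSn d) m) n = snoc (rstd nu m n) (EInf r).
Proof.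
apply: funext => l; rewrite /rstd widen_lift snoc_lift.
case: (unliftP ord_max l) => [j ->|->].
  by rewrite snoc_lift (inj_eq (@lift_inj _ ord_max)) snoc_lift.
by rewrite snoc_max (negbTE (neq_lift _ _)) snoc_max.
Qed.

Lemma abs_step d :
  (forall U Y X Z a w C, @abs_sys d U Y X Z a w C -> card_ge_succ d U -> False) ->
  forall U Y X Z a w C, @abs_sys d.+1 U Y X Z a w C -> card_ge_succ d.+1 U -> False.
Proof.
move=> IH U Y X Z a w C [Hrel [_ [HW1 HW2]]] [Y1 [Y1U [cY1 nUY1]]].
have [HN HS] := cg_nat cY1.
have [n0 [n1 _]] := HN; pose t0 := n0 0%N.
pose DW (W : wseq S -> Prop) (i : I) := (i \in map fst Z) \/ exists eta,
  [/\ forall l, U (eta l), forall l, l != ord_max -> W (eta l) &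
      exists n, i \in map fst (X (rstd eta ord_max n))].
pose NEW W c := exists i, DW W i /\ List.In c (C i).
have NEWfin : forall W c, NEW W c -> exists l : seq (wseq S),
  (forall x, List.In x l -> W x) /\ forall W', (forall x, List.In x l -> W' x) -> NEW W' c.
  move=> W c [i [[Zi|[eta [Ueta Weta [n Xi]]]] Ci]].
    by exists [::]; split=> // W' _; exists i; split=> //; left.
  exists (map (fun j => eta (lift ord_max j)) (enum 'I_d)); split.
    by move=> x /(@In_map_inv _ _ (fun j => eta (lift ord_max j)) _ _) [j [_ ->]]; apply: Weta;
      rewrite eq_sym; apply: neq_lift.
  move=> W' HW'; exists i; split=> //; right; exists eta; split=> //; last by exists n.
  move=> l nl; case: (unliftP ord_max l) nl => [j ->|->]; last by rewrite eqxx.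
  by move=> _; apply: HW'; apply: (In_map_f (fun j => eta (lift ord_max j))); rewrite mem_enum.
have NEWsize : forall W, inj_into W Y1 -> inj_into (NEW W) Y1.
  move=> W hW; case: (pselectT I) => [nI|i0].
    by exists (fun _ => t0); split=> [c [i _]|c c' [i _]]; case: (nI i).
  pose K := ((nat * nat) + ((seq (wseq S) * seq S) * (nat * nat)))%type.
  pose rstL (vs : seq (wseq S)) (ts : seq S) : 'I_d.+1 -> entry S :=
    fun l => if l == ord_max then EFin ts else EInf (nth t0 vs l).
  pose F (k : K) := match k with
    | inl (p, q) => nth t0 (C (nth i0 (map fst Z) p)) q
    | inr ((vs, ts), (p, q)) => nth t0 (C (nth i0 (map fst (X (rstL vs ts))) p)) q end.
  apply: (@inj_surj K _ _ _ _ _ F (inl (0, 0)%N) _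
    (inj_sum HN (inj_prod HN HN HN)
      (inj_prod HN (inj_prod HN (inj_seq HN hW) (inj_seq HN HS)) (inj_prod HN HN HN)))).
  move=> c [i [[Zi|[eta [Ueta Weta [n Xi]]]] Ci]]; have [q Hq] := In_nth t0 Ci.
    by exists (inl (index i (map fst Z), q)); split=> //=; rewrite nth_index.
  pose vs := map (fun j => eta (inord j)) (iota 0 d).
  have E : rstL vs (mkseq (eta ord_max) n) = rstd eta ord_max n.
    apply: funext => l; rewrite /rstL /rstd /=; case: ifP => // /negbT nl.
    have ld : (l < d)%N.
      have := ltn_ord l; rewrite ltnS leq_eqVlt => /orP [/eqP ld|//].
      by case/negP: nl; apply/eqP/val_inj.
    by rewrite (nth_map 0%N) ?size_iota // nth_iota // add0n inord_val.
  exists (inr ((vs, mkseq (eta ord_max) n), (index i (map fst (X (rstd eta ord_max n))), q))).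
  split; last by rewrite /= E nth_index.
  split=> //; split=> // x /(@In_map_inv _ _ (fun j => eta (inord j)) _ _) [j [/In_mem jd ->]].
  apply: Weta.
  rewrite mem_iota add0n in jd; apply/eqP => /(congr1 val) /=.
  by rewrite inordK ?(ltn_trans jd) // => Ejd; move: jd; rewrite Ejd ltnn.
have [W [Y1W injW NW]] := closure_ex HN NEWfin NEWsize (inj_id (fun t (h : Y1 t) => h)).
have [r [Ur nWr]] : exists r, U r /\ ~ W r.
  apply: contrapT => H; apply: nUY1; apply: inj_sub injW => t Ut; apply: contrapT => nW.
  by apply: H; exists t.
pose D := DW W.
have c2 i c : D i -> List.In c (C i) -> W c.
  by move=> Di Ci; apply: NW; exists i.
pose P := fun i => ~~ `[< D i >].
have vlD (l : seq (I * int)) i : (forall x, x \in l -> D x.1) -> P i -> vl l i = 0.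
  move=> Hl Pi; apply: vl_out; apply/negP => /mapP [x xl Ex]; move: Pi.
  by rewrite /P Ex; move/Hl: xl => /asboolP ->.
pose Y' (nu : 'I_d -> wseq S) n := [seq x <- Y (snoc nu r) n | P x.1].
pose X' (mu : 'I_d -> entry S) := [seq x <- X (snoc mu (EInf r)) | P x.1].
pose Z' := [seq x <- Z | P x.1].
pose a' (nu : 'I_d -> wseq S) n := a (snoc nu r) n.
pose w' (nu : 'I_d -> wseq S) := w (snoc nu r).
have Usnoc nu : (forall l, Y1 (nu l)) -> forall l, U (snoc nu r l).
  move=> Hnu l; case: (unliftP ord_max l) => [j ->|->].
    by rewrite snoc_lift; apply: Y1U.
  by rewrite snoc_max.
have DZ x : x \in Z -> D x.1 by move=> xZ; left; apply: map_f.
apply: (IH Y1 Y' X' Z' a' w' C) => //; split; [|split; [|split]].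
- move=> nu Hnu n i; rewrite /Y' /X' /Z' !vl_filter.
  under eq_bigr do rewrite vl_filter.
  case: ifP => Pi; last by rewrite big1 ?mulr0 ?addr0 // => m _; rewrite Pi.
  rewrite Hrel; last exact: Usnoc.
  rewrite (big_ord_recr d) /=.
  have -> : vl (X (rstd (snoc nu r) ord_max n)) i = 0.
    apply: vlD => // x xX; right; exists (snoc nu r); split; first exact: Usnoc.
      move=> l nl; case: (unliftP ord_max l) nl => [j ->|->]; last by rewrite eqxx.
      by move=> _; rewrite snoc_lift; apply: Y1W.
    by exists n; apply: map_f.
  rewrite addr0 (vlD Z) //; congr (_ + _).
  by apply: eq_bigr => m _; rewrite rstd_snoc.
- by move=> _ i; rewrite vl_filter; case: ifP => // Pi; apply: vlD.
- move=> nu Hnu; rewrite /Y' /w' pairing_filter; first by apply: HW1; apply: Usnoc.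
  move=> x _; rewrite /P negbK => /asboolP Dx.
  apply/eqP; apply: contraT => nw; case: nWr.
  by apply: (c2 x.1) => //; rewrite -(snoc_max nu r); apply: HW2 => //; apply: Usnoc.
- move=> nu i Hnu nw l; rewrite -(snoc_lift nu r l).
  by apply: HW2 => //; apply: Usnoc.
Qed.

Theorem abs_main d : forall U Y X Z a w C, @abs_sys d U Y X Z a w C -> card_ge_succ d U -> False.
Proof. elim: d => [|d IH]; [exact: abs_base | exact: abs_step]. Qed.
End Abs.

Import GRing.Theory Num.Theory.
Local Open Scope ring_scope.

Section Zspan.
Variables (k : nat) (S : Type).
Implicit Types (A : fab k S -> Prop) (v : fab k S).

Lemma zspan_ext A v v' : zspan A v -> v =1 v' -> zspan A v'.
Proof. by move=> H /funext <-. Qed.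

Lemma zspan_gen A x : A x -> zspan A x.
Proof.
move=> Ax; apply: (zspan_ext (zspan_add Ax (zspan0 A))) => g; exact: addr0.
Qed.

Lemma zspan_add2 A v v' : zspan A v -> zspan A v' -> zspan A (fun g => v g + v' g).
Proof.
elim=> [|x u Ax _ IH|x u Ax _ IH] H'.
- by apply: (zspan_ext H') => g; rewrite add0r.
- by apply: (zspan_ext (zspan_add Ax (IH H'))) => g; rewrite addrA.
- by apply: (zspan_ext (zspan_sub Ax (IH H'))) => g; rewrite addrAC.
Qed.

Lemma zspan_opp A v : zspan A v -> zspan A (fun g => - v g).
Proof.
elim=> [|x u Ax _ IH|x u Ax _ IH].
- by apply: (zspan_ext (zspan0 A)) => g; rewrite oppr0.
- by apply: (zspan_ext (zspan_sub Ax IH)) => g; rewrite opprD addrC.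
- by apply: (zspan_ext (zspan_add Ax IH)) => g; rewrite opprB.
Qed.

Lemma zspan_sub2 A v v' : zspan A v -> zspan A v' -> zspan A (fun g => v g - v' g).
Proof. by move=> H H'; apply: zspan_add2 H (zspan_opp H'). Qed.

Lemma zspan_genscale A x (z : int) : A x -> zspan A (fun g => z * x g).
Proof.
move=> Ax.
have Hn (n : nat) : zspan A (fun g => n%:Z * x g).
  elim: n => [|n IH]; first by apply: (zspan_ext (zspan0 A)) => g; rewrite mul0r.
  by apply: (zspan_ext (zspan_add Ax IH)) => g; rewrite -add1n PoszD mulrDl mul1r.
case: z => n; first exact: Hn.
apply: (zspan_ext (zspan_opp (Hn n.+1))) => g; by rewrite NegzE mulNr.
Qed.

Lemma zspan_scale A v (z : int) : zspan A v -> zspan A (fun g => z * v g).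
Proof.
elim=> [|x u Ax _ IH|x u Ax _ IH].
- by apply: (zspan_ext (zspan0 A)) => g; rewrite mulr0.
- by apply: (zspan_ext (zspan_add2 (zspan_genscale z Ax) IH)) => g; rewrite mulrDr.
- by apply: (zspan_ext (zspan_sub2 IH (zspan_genscale z Ax))) => g; rewrite mulrBr.
Qed.

Lemma zspan_sum A n (F : 'I_n -> fab k S) : (forall m, zspan A (F m)) ->
  zspan A (fun g => \sum_(m < n) F m g).
Proof.
elim: n F => [|n IH] F HF.
  by apply: (zspan_ext (zspan0 A)) => g; rewrite big_ord0.
refine (zspan_ext (zspan_add2 (IH (fun m => F (widen_ord (leqnSn n) m)) _) (HF ord_max)) _).
  by move=> m; apply: HF.
by move=> g; rewrite big_ord_recr.
Qed.
End Zspan.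

From mathcomp Require Import ring.
Import GRing.Theory Num.Theory.
Local Open Scope ring_scope.

Lemma mem_In (T : eqType) (x : T) s : x \in s -> List.In x s.
Proof. elim: s => [//|y s IH]; rewrite in_cons => /orP [/eqP ->|/IH]; by [left|right]. Qed.

Lemma uniq_NoDup (T : eqType) (s : seq T) : uniq s -> List.NoDup s.
Proof.
elim: s => [|x s IH] /=; first by constructor.
move=> /andP [xs us]; constructor; last exact: IH.
by move=> /In_mem; apply/negP.
Qed.

Definition scl (T : Type) (z : int) (l : seq (T * int)) := [seq (x.1, z * x.2) | x <- l].

Lemma vl_cat (I : eqType) (l1 l2 : seq (I * int)) i : vl (l1 ++ l2) i = vl l1 i + vl l2 i.
Proof. by rewrite /vl big_cat. Qed.

Lemma vl_scl (I : eqType) z (l : seq (I * int)) i : vl (scl z l) i = z * vl l i.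
Proof. by rewrite /vl big_map mulr_sumr. Qed.

Lemma pairing_cat (I : eqType) (l1 l2 : seq (I * int)) w :
  pairing (l1 ++ l2) w = pairing l1 w + pairing l2 w.
Proof. by rewrite /pairing big_cat. Qed.

Lemma pairing_scl (I : eqType) z (l : seq (I * int)) w :
  pairing (scl z l) w = z%:~R * pairing l w.
Proof. by rewrite /pairing big_map mulr_sumr; apply: eq_bigr => x _; rewrite intrM mulrA. Qed.

Section Main.
Variables (k : nat) (S : Type) (Lam : tup k S -> Prop) (a : tup k S -> nat -> int)
  (U : wseq S -> Prop).
Hypothesis Hfull : forall eta, Lam eta.
Variables (I0 : Type) (b : I0 -> fab k S).
Local Notation I := {classic I0}.
Local Notation G := {classic (gen k S)}.
Local Notation genU := (genU Lam U).
Local Notation Rsub := (Rsub Lam a).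
Hypothesis Hb3 : forall s c, List.NoDup s -> Rsub (comb b s c) ->
  forall i, List.In i s -> c i = 0.

Definition func_b (l : seq (I * int)) : fab k S := fun h => \sum_(x <- l) x.2 * b x.1 h.

Lemma keyK l : Rsub (func_b l) -> forall i, vl l i = 0.
Proof.
move=> H i; case: (boolP (i \in undup (map fst l))) => iu; last first.
  by apply: vl_out; rewrite mem_undup in iu.
have Ec : comb b (undup (map fst l)) (vl l) = func_b l.
  apply: funext => h; rewrite /comb /func_b.
  rewrite (@group_sum _ _ (fun x : I * int => x.2 * b x.1 h) _ (undup (map fst l)) (undup_uniq _));
    last by move=> t; rewrite mem_undup.
  apply: eq_bigr => t _; rewrite /vl mulr_suml; apply: eq_bigr => x /eqP <-.
  by [].
apply: (Hb3 (uniq_NoDup (undup_uniq (map fst l)))); first by rewrite Ec.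
exact: (mem_In iu).
Qed.

Variable Tc : fab k S -> seq I * (I -> int).
Hypothesis HTc : forall u, zspan genU u -> Rsub (fun g => u g - comb b (Tc u).1 (Tc u).2 g).

Definition Tg (g : gen k S) : seq (I * int) := [seq (j, (Tc (ebas g)).2 j) | j <- (Tc (ebas g)).1].

Lemma Tg_ok g : zspan genU (ebas g) -> Rsub (fun h => ebas g h - func_b (Tg g) h).
Proof.
move=> /HTc H; apply: (zspan_ext H) => h.
by rewrite /func_b /Tg big_map.
Qed.

Lemma func_b_cat l1 l2 h : func_b (l1 ++ l2) h = func_b l1 h + func_b l2 h.
Proof. by rewrite /func_b big_cat. Qed.

Lemma func_b_scl z l h : func_b (scl z l) h = z * func_b l h.
Proof. by rewrite /func_b big_map mulr_sumr; apply: eq_bigr => x _; rewrite mulrA. Qed.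

Lemma gen_y eta n : (forall l, U (eta l)) -> zspan genU (ebas (Gy eta n)).
Proof. by move=> Ue; apply: zspan_gen; right; left; exists eta, n. Qed.
Lemma gen_z : zspan genU (ebas (@Gz k S)).
Proof. by apply: zspan_gen; left. Qed.
Lemma gen_x eta m n : (forall l, U (eta l)) -> zspan genU (ebas (Gx (restr eta m n))).
Proof. by move=> Ue; apply: zspan_gen; right; right; exists eta, m, n. Qed.

Lemma rel_T eta n i : (forall l, U (eta l)) ->
  (n`!)%:Z * vl (Tg (Gy eta n.+1)) i = vl (Tg (Gy eta n)) i + a eta n * vl (Tg (@Gz k S)) i
     + \sum_(m < k.+1) vl (Tg (Gx (restr eta m n))) i.
Proof.
move=> Ue.
pose LX := \big[cat/[::]]_(m < k.+1) scl (-1) (Tg (Gx (restr eta m n))).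
pose L := scl (n`!)%:Z (Tg (Gy eta n.+1)) ++ scl (-1) (Tg (Gy eta n))
   ++ scl (- a eta n) (Tg (@Gz k S)) ++ LX.
have vlLX : vl LX i = - \sum_(m < k.+1) vl (Tg (Gx (restr eta m n))) i.
  have vl0 : vl ([::] : seq (I * int)) i = 0 by rewrite /vl big_nil.
  rewrite /LX (big_morph (fun l => vl l i) (fun l1 l2 => vl_cat l1 l2 i) vl0).
  by rewrite -sumrN; apply: eq_bigr => m _; rewrite vl_scl mulN1r.
have fLX h : func_b LX h = - \sum_(m < k.+1) func_b (Tg (Gx (restr eta m n))) h.
  have fb0 : func_b [::] h = 0 by rewrite /func_b big_nil.
  rewrite /LX (big_morph (fun l => func_b l h) (fun l1 l2 => func_b_cat l1 l2 h) fb0).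
  by rewrite -sumrN; apply: eq_bigr => m _; rewrite func_b_scl mulN1r.
have HL : Rsub (func_b L).
  have Hrel : Rsub (relvec a eta n) by apply: zspan_gen; exists eta, n.
  have Hd := zspan_sub2 (zspan_sub2 (zspan_sub2
    (zspan_scale (n`!)%:Z (Tg_ok (gen_y (n.+1) Ue))) (Tg_ok (gen_y n Ue)))
    (zspan_scale (a eta n) (Tg_ok gen_z)))
    (zspan_sum (fun m => Tg_ok (gen_x m n Ue))).
  apply: (zspan_ext (zspan_sub2 Hrel Hd)) => h.
  rewrite /L !func_b_cat !func_b_scl fLX /relvec /=.
  rewrite !sumrB.
  set S1 := \sum_(i0 < k.+1) ebas _ h; set S2 := \sum_(i0 < k.+1) func_b _ h.
  set e1 := ebas (Gy eta n.+1) h; set e0 := ebas (Gy eta n) h; set ez := ebas _ h.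
  set f1 := func_b _ h; set f0 := func_b (Tg (Gy eta n)) h; set fz := func_b (Tg (Gz k S)) h.
  have E : forall (N e1 e0 ez f1 f0 fz A S1 S2 : int), N * e1 - e0 - A * ez - S1
    - (N * (e1 - f1) - (e0 - f0) - A * (ez - fz) - (S1 - S2))
    = N * f1 + (-1 * f0 + (- A * fz - S2)) by move=> *; ring.
  exact: E.
have := keyK HL i; rewrite /L !vl_cat !vl_scl vlLX => E.
have E2 : forall (N v1 v0 A vz Sm : int), N * v1 + (-1 * v0 + (- A * vz + - Sm)) = 0 ->
  N * v1 = v0 + A * vz + Sm.
  move=> N v1 v0 A vz Sm H; apply/eqP; rewrite -subr_eq0 -H; apply/eqP; ring.
exact: E2 E.
Qed.
End Main.

From mathcomp Require Import ring.
Import GRing.Theory Num.Theory.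
Local Open Scope ring_scope.

Lemma In_cat T (x : T) s1 s2 : List.In x s1 \/ List.In x s2 -> List.In x (s1 ++ s2).
Proof. by elim: s1 => [[]//|y s1 IH] /= [[->|H]|H]; [left|right; apply: IH; left|right; apply: IH; right]. Qed.

Lemma In_flatten A B (f : A -> seq B) s x y : List.In x s -> List.In y (f x) ->
  List.In y (flatten (map f s)).
Proof.
elim: s => [//|z s IH] /= [<-|Hx] Hy; apply: In_cat; first by left.
by right; apply: IH.
Qed.

Lemma sum_neq0 A (l : seq A) (F : A -> rat) : \sum_(x <- l) F x != 0 ->
  exists x, List.In x l /\ F x != 0.
Proof.
elim: l => [|x l IH]; first by rewrite big_nil eqxx.
rewrite big_cons; case: (eqVneq (F x) 0) => [->|nx]; last by exists x; split=> //; left.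
rewrite add0r => /IH [y [yl Fy]]; by exists y; split=> //; right.
Qed.

Section W.
Variables (k : nat) (S : Type) (Lam : tup k S -> Prop) (a : tup k S -> nat -> int)
  (U : wseq S -> Prop).
Hypothesis Hfull : forall eta, Lam eta.
Local Notation G := {classic (gen k S)}.
Local Notation genU := (genU Lam U).
Local Notation Rsub := (Rsub Lam a).

Definition funcg (l : seq (G * int)) : fab k S := fun h => \sum_(x <- l) x.2 * ebas x.1 h.

Lemma funcg_vl l h : funcg l h = vl l (h : G).
Proof.
rewrite /funcg /vl [RHS]big_mkcond; apply: eq_bigr => x _; rewrite /ebas.
case: pselect => [E|NE] /=; first by rewrite mulr1 -E eqxx.
case: eqP => [E|_]; [by case: NE | by rewrite mulr0].
Qed.

Lemma funcg_cat l1 l2 h : funcg (l1 ++ l2) h = funcg l1 h + funcg l2 h.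
Proof. by rewrite /funcg big_cat. Qed.

Lemma funcg_scl z l h : funcg (scl z l) h = z * funcg l h.
Proof. by rewrite /funcg big_map mulr_sumr; apply: eq_bigr => x _; rewrite mulrA. Qed.

Lemma pairing_wd l1 l2 (w : G -> rat) : funcg l1 = funcg l2 -> pairing l1 w = pairing l2 w.
Proof.
move=> E.
have : pairing (l1 ++ scl (-1) l2) w = 0.
  apply: pairing0 => t; rewrite vl_cat vl_scl -!funcg_vl E mulN1r subrr //.
rewrite pairing_cat pairing_scl => /eqP; rewrite mulN1r subr_eq0 => /eqP //.
Qed.

Fixpoint qf (n : nat) : rat := match n with 0 => 1 | n'.+1 => qf n' / (n'`!)%:R end.

Definition val (eta : tup k S) (g : G) : rat :=
  match g with Gy eta' n => if pselect (eta' = eta) then qf n else 0 | _ => 0 end.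

Definition Lrel (eta : tup k S) (n : nat) : seq (G * int) :=
  [:: (Gy eta n.+1 : G, (n`!)%:Z); (Gy eta n : G, -1); (@Gz k S : G, - a eta n)] ++
  [seq (Gx (restr eta m n) : G, -1) | m <- index_enum 'I_k.+1].

Lemma funcg_Lrel eta n : funcg (Lrel eta n) = relvec a eta n.
Proof.
apply/funext => h; rewrite /Lrel funcg_cat /funcg /= !big_cons big_nil big_map /relvec.
rewrite -sumrN.
have -> : \sum_(j <- index_enum 'I_k.+1) (-1) * ebas (Gx (restr eta j n)) h =
          \sum_(i < k.+1) - ebas (Gx (restr eta i n)) h.
  by apply: eq_bigr => m _; rewrite mulN1r.
set s1 := \sum_(i < k.+1) _.
have E : forall (N e1 e0 A ez s : int), N * e1 + (-1 * e0 + (- A * ez + 0)) + s =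
  N * e1 - e0 - A * ez + s by move=> *; ring.
exact: E.
Qed.

Lemma pairing_Lrel eta' eta n : pairing (Lrel eta' n) (val eta) = 0.
Proof.
rewrite /Lrel pairing_cat /pairing /= !big_cons big_nil big_map.
rewrite big1; last by move=> m _; rewrite mulr0.
rewrite /= mulr0 !addr0.
case: pselect => [E|ne] /=; last by rewrite !mulr0 addr0.
rewrite mulN1r.
have -> : ((n`!)%:Z)%:~R = (n`!)%:R :> rat by [].
rewrite mulrC divfK ?subrr // pnatr_eq0 -lt0n fact_gt0 //.
Qed.

Lemma Rsub_rep eta v : Rsub v -> exists l, v = funcg l /\ pairing l (val eta) = 0.
Proof.
elim=> [|x u [eta' [n [_ ->]]] _ [l [-> Hl]]|x u [eta' [n [_ ->]]] _ [l [-> Hl]]].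
- by exists [::]; split; [rewrite /funcg; apply/funext => h; rewrite big_nil | rewrite /pairing big_nil].
- exists (Lrel eta' n ++ l); split.
    by apply/funext => h; rewrite funcg_cat funcg_Lrel.
  by rewrite pairing_cat pairing_Lrel Hl addr0.
- exists (l ++ scl (-1) (Lrel eta' n)); split.
    by apply/funext => h; rewrite funcg_cat funcg_scl funcg_Lrel mulN1r.
  by rewrite pairing_cat pairing_scl pairing_Lrel Hl mulr0 addr0.
Qed.

Lemma funcg1 g : funcg [:: (g : G, 1)] = ebas g.
Proof. by rewrite /funcg; apply/funext => h; rewrite big_cons big_nil mul1r addr0. Qed.

Lemma zspan_rep v : zspan genU v -> exists l, v = funcg l.
Proof.
have Hg x : genU x -> exists g, x = ebas g.
  move=> [->|[[eta [n [_ [_ ->]]]]|[eta [m [n [_ [_ ->]]]]]]]; by eexists.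
elim=> [|x u /Hg [g ->] _ [l ->]|x u /Hg [g ->] _ [l ->]].
- by exists [::]; rewrite /funcg; apply/funext => h; rewrite big_nil.
- by exists ((g : G, 1) :: l); rewrite /funcg; apply/funext => h; rewrite big_cons mul1r.
- exists (l ++ [:: (g : G, -1)]); rewrite /funcg; apply/funext => h.
  by rewrite big_cat /= big_cons big_nil mulN1r addr0.
Qed.

Variables (I0 : Type) (b : I0 -> fab k S).
Local Notation I := {classic I0}.
Variable rep : I0 -> seq (G * int).
Hypothesis Hrep : forall i, b i = funcg (rep i).

Definition wt (eta : tup k S) (i : I) : rat := pairing (rep i) (val eta).

Definition coords (g : G) : seq (wseq S) :=
  match g with Gy eta n => [seq eta l | l <- index_enum 'I_k.+1] | _ => [::] end.

Definition Cw (i : I) : seq (wseq S) := flatten [seq coords x.1 | x <- rep i].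

Lemma W2 eta i l : wt eta i != 0 -> List.In (eta l) (Cw i).
Proof.
move=> /sum_neq0 [x [xr nx]].
have [n Ex] : exists n, x.1 = Gy eta n.
  move: nx; case: x xr => [[|nu|eta' n] c] xr //=; rewrite ?mulr0 ?eqxx //.
  by case: pselect => [E|_] /=; [exists n; rewrite E | rewrite mulr0 eqxx].
rewrite /Cw; apply: (@In_flatten _ _ (fun x : G * int => coords x.1) _ _ _ xr).
by rewrite Ex /=; apply: (In_map_f eta); rewrite mem_index_enum.
Qed.

Lemma pairing_flat (l : seq (I * int)) (eta : tup k S) :
  pairing (flatten [seq scl x.2 (rep x.1) | x <- l]) (val eta) = pairing l (wt eta).
Proof.
elim: l => [|x l IH]; first by rewrite /pairing !big_nil.
by rewrite /= pairing_cat IH pairing_scl /pairing big_cons.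
Qed.

Lemma funcg_flat (l : seq (I * int)) h :
  funcg (flatten [seq scl x.2 (rep x.1) | x <- l]) h = func_b b l h.
Proof.
elim: l => [|x l IH]; first by rewrite /funcg /func_b !big_nil.
by rewrite /= funcg_cat IH funcg_scl /func_b big_cons -Hrep.
Qed.
End W.

From mathcomp Require Import ring.
Import GRing.Theory Num.Theory.

Unset Implicit Arguments.
Local Close Scope ring_scope.
Theorem claim1p14 (k : nat) (S : Type) (Lam : tup k S -> Prop)
  (a : tup k S -> nat -> int)
  (Hfull : forall eta : tup k S, Lam eta)
  (U : wseq S -> Prop)
  (HU : card_ge_succ k.+1 U) :
  ~ GU_free Lam a U.
Proof.
move=> [I0 [b [Hb1 [Hb2 Hb3]]]].
have /choice [Tc HTc] : forall u : fab k S,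
    exists sc : seq {classic I0} * ({classic I0} -> int),
    zspan (genU Lam U) u -> Rsub Lam a (fun g => (u g - comb b sc.1 sc.2 g)%R).
  move=> u; case: (pselect (zspan (genU Lam U) u)) => [/Hb2 [s [c H]]|nu].
    by exists (s, c).
  by exists ([::], fun _ => 0%R).
have /choice [rep Hrep] : forall i : I0, exists l, b i = funcg l.
  by move=> i; apply: zspan_rep (Hb1 i).
apply: (@abs_main S {classic I0} k.+1 U (fun eta n => Tg Tc (Gy eta n))
  (fun nu => Tg Tc (Gx nu)) (Tg Tc (@Gz k S)) a (wt rep) (Cw rep) _ HU).
split; [|split; [|split]].
- move=> eta Ue n i; exact: (rel_T Hfull Hb3 HTc n i Ue).
- by [].
- move=> eta Ue.
  have HT : zspan (genU Lam U) (ebas (Gy eta 0)).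
    by apply: zspan_gen; right; left; exists eta, 0%N.
  have [lD [ED HD]] := Rsub_rep eta (Tg_ok HTc HT).
  pose L' := flatten [seq scl x.2 (rep x.1) | x <- Tg Tc (Gy eta 0)].
  have EL : funcg L' = funcg ([:: (Gy eta 0 : {classic gen k S}, 1%R)] ++ scl (-1) lD).
    apply/funext => h; rewrite (funcg_flat Hrep) funcg_cat funcg_scl funcg1 -ED /=.
    have E : forall x y : int, y = (x + -1 * (x - y))%R by move=> *; ring.
    exact: E.
  have := pairing_wd (val eta) EL.
  rewrite pairing_flat pairing_cat pairing_scl HD GRing.mulr0 GRing.addr0 => ->.
  rewrite /pairing big_cons big_nil /=.
  by case: pselect => //= _; rewrite GRing.mulr1 GRing.addr0.
- move=> eta i Ue nw l; exact: W2.
Qed.
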